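(* Let $c\ge\lfloor n/2\rfloor$ and $\mathbf{s}_n\in\mathcal{B}(n,c,d_1)$ with $add(\mathbf{s}_n)=t_1$. Suppose that for some integer $h$ with $1\le h\le n-1$, the shifted sequence $R^{h}(\mathbf{s}_n)$ belongs to $\mathcal{B}(n,c,d_2)$ with $add(R^{h}(\mathbf{s}_n))=t_2$. Let $b=h-(n-c-d_1)$. Then $t_1\le b<d_1+d_2-t_2$.
   Context: All sequences are binary (entries in $\mathbb{Z}_2$), $\overline{x}=x\oplus1$, $x\bmod d$ is the least nonnegative residue, and $\mathbf{a}^q$ is the concatenation of $q$ copies of $\mathbf a$. For $\mathbf{s}_n=(s_0,\dots,s_{n-1})$, $\mathbf{s}_j=(s_0,\dots,s_{j-1})$. A length-$m$ sequence is periodic if it is the concatenation of $m/e$ copies of a length-$e$ sequence for a proper divisor $e$ of $m$, aperiodic otherwise. Right circular shift: $R^k(\mathbf{s}_n)=(s_{n-k},\dots,s_{n-1},s_0,\dots,s_{n-k-1})$. For $c\ge\lfloor n/2\rfloor$ and $1\le d\le\min\{n-c,\lfloor n/2\rfloor\}$, $\mathcal{B}(n,c,d)$ is the set of aperiodic length-$n$ sequences $\mathbf{s}_n$ with $\mathbf{s}_d$ aperiodic and $\mathbf{s}_{c+d}=(s_0,\dots,s_{d-1})^q(s_0,\dots,s_{r-1},\overline{s_r})$, where $q=\lfloor(c+d-1)/d\rfloor$, $r=c+d-1-qd$, and $s_{c+d},\dots,s_{n-1}$ are arbitrary. For $\mathbf{s}_n\in\mathcal{B}(n,c,d)$, $add(\mathbf{s}_n)$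 is the integer $t\ge0$ such that $s_{n-1-i}=s_{(d-1-i)\bmod d}$ for $0\le i<t$ and $s_{n-1-t}\neq s_{(d-1-t)\bmod d}$. *)

(* Defs.v *)
From mathcomp Require Import all_boot all_order all_algebra.
Set Implicit Arguments. Unset Strict Implicit. Unset Printing Implicit Defensive.

Definition periodic (s : seq bool) : Prop :=
  exists e : nat, [/\ 0 < e, e < size s, e %| size s &
    s = flatten (nseq (size s %/ e) (take e s))].

Definition aperiodic (s : seq bool) : Prop := ~ periodic s.

(* Membership in B(n,c,d) (the parameter range 1 <= d <= min(n-c, n/2)
   is part of the definition of the set). *)
Definition inB (n c d : nat) (s : seq bool) : Prop :=
  let q := (c + d - 1) %/ d in
  let r := c + d - 1 - q * d in
  [/\ size s = n, 1 <= d <= minn (n - c) n./2,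
      aperiodic s, aperiodic (take d s) &
      take (c + d) s =
        flatten (nseq q (take d s)) ++ rcons (take r s) (~~ nth false s r)].

(* add(s) = t for s in B(n,c,d).  The index (d-1-i) mod d (least
   nonnegative residue) equals d - 1 - (i %% d) in nat. *)
Definition is_add (n d : nat) (s : seq bool) (t : nat) : Prop :=
  [/\ t < n,
      (forall i, i < t -> nth false s (n - 1 - i) = nth false s (d - 1 - i %% d)) &
      nth false s (n - 1 - t) != nth false s (d - 1 - t %% d)].

(* Right circular shift R^k: (s_{n-k},...,s_{n-1},s_0,...,s_{n-k-1}). *)
Definition Rshift (k : nat) (s : seq bool) : seq bool := rotr k s.

(* Main.v *)
Require Import Defs.
From mathcomp Require Import all_boot all_order all_algebra.
Import Order.TTheory GRing.Theory Num.Theory.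
From mathcomp Require Import zify.

Definition per (f : nat -> bool) (p L : nat) := forall i, i + p < L -> f i = f (i + p).

Lemma per_mod f p L : 0 < p -> per f p L -> forall i, i < L -> f i = f (i %% p).
Proof.
move=> p0 H i; elim/ltn_ind: i => i IH iL.
case: (ltnP i p) => ip; first by rewrite modn_small.
have -> : i = (i - p) + p by lia.
rewrite -H; last by lia.
rewrite modnDr; apply: IH; lia.
Qed.

Lemma fw N : forall p q L f, p + q <= N -> 0 < p -> 0 < q -> p + q - gcdn p q <= L ->
  per f p L -> per f q L -> forall i, i < L -> f i = f (i %% gcdn p q).
Proof.
elim: N => [|N IH] p q L f hN p0 q0 hL Hp Hq; first by lia.
wlog pq : p q p0 q0 hN hL Hp Hq / p <= q.
  move=> W; case: (leqP p q) => pq; first by apply: W.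
  rewrite gcdnC; apply: W => //; [lia|by rewrite gcdnC addnC|lia].
case: (ltnP p q) => pq'; last first.
  have -> : q = p by lia.
  by rewrite gcdnn; apply: per_mod.
have gE : gcdn p (q - p) = gcdn p q.
  by rewrite -[in RHS](subnK (ltnW pq')) gcdnDr.
have gd : gcdn p q %| q - p by rewrite -gE dvdn_gcdr.
have gle : gcdn p q <= q - p by apply: dvdn_leq; [lia|].
have gp : gcdn p q %| p by apply: dvdn_gcdl.
have IH' := IH p (q - p) (L - p) f.
rewrite gE in IH'.
have IH2 : forall i, i < L - p -> f i = f (i %% gcdn p q).
  apply: IH' => //; try lia.
  - move=> i hi; apply: Hp; lia.
  - move=> i hi; rewrite (Hq i); last by lia.
    have -> : i + q = i + (q - p) + p by lia.
    by rewrite -Hp; last by lia.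
move=> i iL.
rewrite (@per_mod f p L p0 Hp i iL) IH2; last by have := ltn_pmod i p0; lia.
by rewrite modn_dvdm.
Qed.
Lemma modD_aux a x D : 0 < D -> x < D -> (a + (x + (D - a %% D)) %% D) %% D = x.
Proof.
move=> D0 xD.
rewrite modnDmr.
have aD := ltn_pmod a D0.
rewrite {1}(divn_eq a D).
have -> : a %/ D * D + a %% D + (x + (D - a %% D)) = (a %/ D).+1 * D + x.
  rewrite mulSn; lia.
by rewrite modnMDl modn_small.
Qed.

Lemma core (F : nat -> bool) d D L a m o :
  0 < d -> d < D -> d + D - 1 <= m -> a + m <= L -> o + D <= L ->
  per F D L -> (forall i, i + d < m -> F (a + i) = F (a + i + d)) ->
  ~ (exists g, [/\ 0 < g, g < D, g %| D & forall r, r < D -> F (o + r) = F (o + r %% g)]) -> False.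
Proof.
move=> d0 dD hm haL hoL HD Hd; apply.
set g := gcdn d D.
have D0 : 0 < D by lia.
have g0 : 0 < g by rewrite gcdn_gt0 d0.
have gd : g <= d by apply: dvdn_leq => //; apply: dvdn_gcdl.
have gD : g %| D by apply: dvdn_gcdr.
have HF : forall i, i < m -> F (a + i) = F (a + i %% g).
  apply: (@fw (d + D) d D m (fun k => F (a + k))) => //.
  - lia.
  - by move=> i hi /=; rewrite Hd // addnA.
  - by move=> i hi /=; rewrite addnA HD //; lia.
have Hm := @per_mod F D L D0 HD.
pose K := D - a %% D.
have key : forall x, x < D -> F x = F (a + ((x + K) %% D) %% g).
  move=> x xD.
  rewrite -HF; last by have := ltn_pmod (x + K) D0; lia.
  rewrite [in RHS]Hm; last by have := ltn_pmod (x + K) D0; lia.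
  by rewrite /K modD_aux.
exists g; split => //; first lia.
move=> r rD.
have rg : r %% g <= r by apply: leq_mod.
rewrite Hm; last lia.
rewrite [F (o + r %% g)]Hm; last lia.
rewrite key; last by apply: ltn_pmod.
rewrite [F ((o + r %% g) %% D)]key; last by apply: ltn_pmod.
congr (F (a + _)).
rewrite !modn_dvdm //.
rewrite -modnDml modn_dvdm // modnDml.
rewrite -[in RHS]modnDml modn_dvdm // modnDml.
by rewrite -!addnA !(addnCA o) modnDml.
Qed.


Lemma size_flatten_nseq (T : Type) q (l : seq T) : size (flatten (nseq q l)) = q * size l.
Proof. by elim: q => //= q IH; rewrite size_cat IH mulSn. Qed.

Lemma nth_flatten_nseq (T : Type) (x0 : T) q (l : seq T) i :
  i < q * size l -> nth x0 (flatten (nseq q l)) i = nth x0 l (i %% size l).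
Proof.
elim: q i => [|q IH] i /=; first by rewrite mul0n.
rewrite mulSn nth_cat => hi.
case: ltnP => il; first by rewrite modn_small.
rewrite IH; last by lia.
by rewrite -{2}(subnK il) modnDr.
Qed.

Lemma inB_main n c d w : inB n c d w ->
  (forall k, k < c + d - 1 -> nth false w k = nth false w (k %% d)) /\
  nth false w (c + d - 1) = ~~ nth false w ((c + d - 1) %% d).
Proof.
case=> sw hd _ _ E.
move: E.
set q := (c + d - 1) %/ d.
set r := c + d - 1 - q * d.
move=> E.
have d0 : 0 < d by lia.
have hdn : d <= n.
  lia.
have sz : size (take d w) = d by rewrite size_take sw; case: ltnP => //; lia.
have mE := divn_eq (c + d - 1) d.
have rE : r = (c + d - 1) %% d by rewrite /r; lia.
have rd : r < d by rewrite rE ltn_pmod.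
have Hn : forall k, k < c + d -> nth false w k =
   nth false (flatten (nseq q (take d w)) ++ rcons (take r w) (~~ nth false w r)) k.
  by move=> k hk; rewrite -E nth_take.
split.
  move=> k hk; rewrite Hn; last by lia.
  rewrite nth_cat size_flatten_nseq sz.
  case: ltnP => kq.
    by rewrite nth_flatten_nseq ?sz // nth_take // ltn_pmod.
  rewrite nth_rcons size_take.
  have rn : r < size w by rewrite sw; lia.
  rewrite rn.
  have -> : k - q * d < r by rewrite -/q in mE; lia.
  rewrite nth_take; last by rewrite -/q in mE; lia.
  congr nth.
  have kE : k = q * d + (k - q * d) by lia.
  rewrite {2}kE modnMDl modn_small //; rewrite -/q in mE; lia.
rewrite Hn; last by lia.
rewrite nth_cat size_flatten_nseq sz.
have -> : (c + d - 1 < q * d) = false by rewrite -/q in mE; lia.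
rewrite nth_rcons size_take.
have rn : r < size w by rewrite sw; lia.
rewrite rn.
have -> : c + d - 1 - q * d = r by [].
by rewrite ltnn eqxx rE.
Qed.

Lemma window (Y : nat -> bool) n c d t (w : seq bool) B :
  n./2 <= c -> inB n c d w -> is_add n d w t -> n <= B ->
  (forall k, k < n -> Y (B + k) = nth false w k) ->
  (forall i, i < n -> Y (B - 1 - i) = nth false w (n - 1 - i)) ->
  [/\ (forall j, B - t <= j -> j + d < B + c + d - 1 -> Y j = Y (j + d)),
      Y (B + c + d - 1) != Y (B + c - 1),
      ~ (exists g, [/\ 0 < g, g < d, g %| d & forall r, r < d -> Y (B + r) = Y (B + r %% g)]) &
      [/\ 0 < d, d <= c, c + d <= n & t < n]].
Proof.
move=> hc hB hA nB HY HYm.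
have [Hm Hb] := @inB_main n c d w hB.
case: hB => sw hd aw ad _.
case: hA => tn Ht _.
have d0 : 0 < d by lia.
have dc : d <= c by lia.
have cdn : c + d <= n by lia.
have dn : d <= n by lia.
split => //.
- move=> j h1 h2.
  case: (leqP B j) => jB.
    have -> : j = B + (j - B) by lia.
    have -> : B + (j - B) + d = B + (j - B + d) by lia.
    rewrite !HY; try lia.
    rewrite Hm; last lia.
    by rewrite [in RHS]Hm ?modnDr //; lia.
  have -> : j = B - 1 - (B - 1 - j) by lia.
  rewrite HYm; last lia.
  rewrite Ht; last lia.
  case: (leqP B (j + d)) => jdB.
    have -> : B - 1 - (B - 1 - j) + d = B + (d - 1 - (B - 1 - j)) by lia.
    rewrite HY; last lia.
    by rewrite modn_small //; lia.
  have -> : B - 1 - (B - 1 - j) + d = B - 1 - (B - 1 - j - d) by lia.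
  rewrite HYm; last lia.
  rewrite Ht; last lia.
  have -> : B - 1 - j = (B - 1 - j - d) + d by lia.
  by rewrite addnK modnDr.
- have -> : B + c + d - 1 = B + (c + d - 1) by lia.
  have -> : B + c - 1 = B + (c - 1) by lia.
  rewrite !HY; try lia.
  rewrite Hb [nth false w (c - 1)]Hm; last lia.
  have -> : c + d - 1 = (c - 1) + d by lia.
  by rewrite modnDr; case: (nth false w _).
- case=> g [g0 gd gdv Hg]; apply: ad.
  have sz : size (take d w) = d by rewrite size_take sw; case: ltnP => //; lia.
  exists g; split; rewrite ?sz //.
  have szg : size (take g (take d w)) = g by rewrite size_take sz gd.
  apply: (@eq_from_nth _ false).
    by rewrite size_flatten_nseq szg sz divnK.
  move=> i; rewrite sz => id.
  rewrite nth_flatten_nseq; last by rewrite szg divnK.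
  rewrite szg nth_take //.
  have ig2 : i %% g < g by rewrite ltn_pmod.
  have ig : i %% g < d by have := ltn_pmod i g0; lia.
  rewrite !nth_take //.
  rewrite -!HY; try lia.
  exact: Hg.
Qed.

Lemma nth_rotr' (s : seq bool) h k : h <= size s -> k < size s ->
  nth false (rotr h s) k = nth false s ((k + (size s - h)) %% size s).
Proof.
move=> hs ks; rewrite /rotr /rot nth_cat size_drop.
have -> : size s - (size s - h) = h by lia.
case: ltnP => kh.
  by rewrite nth_drop modn_small; [congr nth; lia | lia].
rewrite nth_take; last by lia.
have -> : k + (size s - h) = (k - h) + size s by lia.
by rewrite modnDr modn_small //; lia.
Qed.

Lemma two_lt (Y : nat -> bool) d1 d2 A1 E1 A2 E2 O2 :
  (forall j, A1 <= j -> j + d1 < E1 -> Y j = Y (j + d1)) ->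
  (forall j, A2 <= j -> j + d2 < E2 -> Y j = Y (j + d2)) ->
  ~ (exists g, [/\ 0 < g, g < d2, g %| d2 & forall r, r < d2 -> Y (O2 + r) = Y (O2 + r %% g)]) ->
  A2 <= O2 -> O2 + d2 <= E2 -> 0 < d1 ->
  maxn A1 A2 + d1 + d2 - 1 <= minn E1 E2 -> ~ d1 < d2.
Proof.
move=> P1 P2 ap2 h1 h2 d10 hov dd.
apply: (@core (fun k => Y (A2 + k)) d1 d2 (E2 - A2) (maxn A1 A2 - A2)
   (minn E1 E2 - maxn A1 A2) (O2 - A2)) => //; try lia.
- move=> i hi /=; rewrite P2; [by rewrite addnA | lia | lia].
- move=> i hi /=.
  rewrite -!addnA P1; [by rewrite !addnA | lia | lia].
- case=> g [g0 gd gdv Hg]; apply: ap2; exists g; split => // r hr.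
  have E x : A2 + (O2 - A2 + x) = O2 + x by lia.
  by have := Hg r hr; rewrite /= !E.
Qed.

Lemma Ygen (s : seq bool) n B : n %| B -> n <= B ->
  (forall k, k < n -> nth false s ((B + k) %% n) = nth false s k) /\
  (forall i, i < n -> nth false s ((B - 1 - i) %% n) = nth false s (n - 1 - i)).
Proof.
move=> dB nB; split.
  move=> k kn; rewrite -modnDml (eqP dB) add0n modn_small //.
move=> i i_n.
have dB' : n %| B - n by rewrite dvdn_sub ?dvdnn.
have -> : B - 1 - i = (B - n) + (n - 1 - i) by lia.
by rewrite -modnDml (eqP dB') add0n modn_small //; lia.
Qed.
Lemma ov1 n c d1 d2 t1 t2 p : n <= 2 * c + 1 -> 0 < d1 <= c -> 0 < d2 <= c -> c + d1 <= n -> c + d2 <= n ->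
  t1 < n -> t2 < n -> 1 <= p <= n - 1 -> c + d1 < t1 + p ->
  maxn (2 * n - t1) (n + p - t2) + d1 + d2 - 1 <= minn (2 * n + c + d1 - 1) (n + p + c + d2 - 1) /\
  maxn (n + p - t2) (2 * n - t1) + d2 + d1 - 1 <= minn (n + p + c + d2 - 1) (2 * n + c + d1 - 1).
Proof. lia. Qed.
Lemma ov2 n c d1 d2 t1 t2 p : n <= 2 * c + 1 -> 0 < d1 <= c -> 0 < d2 <= c -> c + d1 <= n -> c + d2 <= n ->
  t1 < n -> t2 < n -> 1 <= p <= n - 1 -> p + d2 <= c + t2 ->
  maxn (n - t1) (n + p - t2) + d1 + d2 - 1 <= minn (n + c + d1 - 1) (n + p + c + d2 - 1) /\
  maxn (n + p - t2) (n - t1) + d2 + d1 - 1 <= minn (n + p + c + d2 - 1) (n + c + d1 - 1).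
Proof. lia. Qed.

Lemma half_le n : n <= 2 * n./2 + 1.
Proof. rewrite -[n in n <= _]odd_double_half -muln2; case: (odd n) => /=; lia. Qed.

Lemma oe B c d : 0 < c -> B + d <= B + c + d - 1.
Proof. lia. Qed.

Lemma fin1 n c d1 t1 p : n <= 2 * c + 1 -> 0 < d1 -> 1 <= p <= n - 1 -> c + d1 < t1 + p ->
  2 * n - t1 <= n + p + c - 1 /\ n + p + c - 1 + d1 < 2 * n + c + d1 - 1.
Proof. lia. Qed.

Lemma fin2 n c d2 t2 p : 0 < c -> 0 < d2 -> 1 <= p -> p + d2 <= c + t2 ->
  n + p - t2 <= n + c - 1 /\ n + c - 1 + d2 < n + p + c + d2 - 1.
Proof. lia. Qed.

Theorem lemma6 (n c d1 d2 t1 t2 h : nat) (s : seq bool) :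
  n./2 <= c ->
  inB n c d1 s -> is_add n d1 s t1 ->
  1 <= h <= n - 1 ->
  inB n c d2 (Rshift h s) -> is_add n d2 (Rshift h s) t2 ->
  let b : int := (h%:Z - (n%:Z - c%:Z - d1%:Z))%R in
  (t1%:Z <= b)%R /\ (b < d1%:Z + d2%:Z - t2%:Z)%R.
Proof.
move=> hc hB1 hA1 hh hB2 hA2 b.
have sw : size s = n by case: hB1.
pose Y j := nth false s (j %% n).
pose p := n - h.
have n0 : 0 < n by lia.
have [Ya Yb] := Ygen s n n (dvdnn n) (leqnn n).
have [Ya2 Yb2] := Ygen s n (2 * n) (dvdn_mull 2 (dvdnn n)) (leq_pmull n (isT : 0 < 2)).
have [P1 Br1 Ap1 [d10 d1c cd1 t1n]] := @window Y n c d1 t1 s n hc hB1 hA1 (leqnn n) Ya Yb.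
have [P1' Br1' Ap1' _] := @window Y n c d1 t1 s (2 * n) hc hB1 hA1 (leq_pmull n (isT : 0 < 2)) Ya2 Yb2.
have Hu : forall k, k < n -> nth false (Rshift h s) k = Y (n + p + k).
  move=> k kn; rewrite /Rshift nth_rotr' sw; try lia.
  rewrite /Y; congr nth.
  by rewrite /p -addnA modnDl addnC.
have Hum : forall i, i < n -> Y (n + p - 1 - i) = nth false (Rshift h s) (n - 1 - i).
  move=> i i_n; rewrite Hu; last lia.
  rewrite /Y; have -> : n + p + (n - 1 - i) = (n + p - 1 - i) + n by lia.
  by rewrite modnDr.
have [P2 Br2 Ap2 [d20 d2c cd2 t2n]] := @window Y n c d2 t2 (Rshift h s) (n + p) hc hB2 hA2 (leq_addr _ _)
   (fun k kn => esym (Hu k kn)) Hum.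
have hp : 1 <= p <= n - 1 by lia.
have c0 : 0 < c by lia.
have hn : n <= 2 * c + 1 by have := half_le n; lia.
split.
- suff : t1 + p <= c + d1 by rewrite /b /p; lia.
  rewrite leqNgt; apply/negP => H.
  have e : d1 = d2.
    have L1 := @two_lt Y d1 d2 (2 * n - t1) (2 * n + c + d1 - 1) (n + p - t2) (n + p + c + d2 - 1) (n + p)
       P1' P2 Ap2.
    have L2 := @two_lt Y d2 d1 (n + p - t2) (n + p + c + d2 - 1) (2 * n - t1) (2 * n + c + d1 - 1) (2 * n)
       P2 P1' Ap1'.
    have {}L1 := L1 (leq_subr _ _) (oe _ _ _ c0) d10.
    have {}L2 := L2 (leq_subr _ _) (oe _ _ _ c0) d20.
    have [o1 o2] := ov1 n c d1 d2 t1 t2 p hn (introT andP (conj d10 d1c)) (introT andP (conj d20 d2c)) cd1 cd2 t1n t2n hp H.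
    have := L1 o1; have := L2 o2; move=> a2 a1.
    by case: (ltngtP d1 d2).
  subst d2.
  move/negP: Br2; apply.
  have [f1 f2] := fin1 n c d1 t1 p hn d10 hp H.
  rewrite (P1' (n + p + c - 1)) //.
  by have -> : n + p + c - 1 + d1 = n + p + c + d1 - 1 by lia.
- suff : c + t2 < p + d2 by rewrite /b /p; lia.
  rewrite ltnNge; apply/negP => H.
  have e : d1 = d2.
    have L1 := @two_lt Y d1 d2 (n - t1) (n + c + d1 - 1) (n + p - t2) (n + p + c + d2 - 1) (n + p)
       P1 P2 Ap2.
    have L2 := @two_lt Y d2 d1 (n + p - t2) (n + p + c + d2 - 1) (n - t1) (n + c + d1 - 1) n
       P2 P1 Ap1.
    have {}L1 := L1 (leq_subr _ _) (oe _ _ _ c0) d10.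
    have {}L2 := L2 (leq_subr _ _) (oe _ _ _ c0) d20.
    have [o1 o2] := ov2 n c d1 d2 t1 t2 p hn (introT andP (conj d10 d1c)) (introT andP (conj d20 d2c)) cd1 cd2 t1n t2n hp H.
    have := L1 o1; have := L2 o2; move=> a2 a1.
    by case: (ltngtP d1 d2).
  subst d2.
  move/negP: Br1; apply.
  have [f1 f2] := fin2 n c d1 t2 p c0 d10 (proj1 (andP hp)) H.
  rewrite (P2 (n + c - 1)) //.
  by have -> : n + c - 1 + d1 = n + c + d1 - 1 by lia.
Qed.
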